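(* Let $n \ge 2$ and $r \in \mathbb{Z}$ with $r \equiv 2 \pmod 3$ and $3 \mid n$. Then neither $\mathcal{E}_{n,r} := \mathcal{P}_n(2;1-r)$ nor $\mathcal{P}_n(r;r)$ is a regular presentation of $Q_{4n}$.
   Context: $Q_{4n}$ is identified with $\langle x, y \mid x^n y^{-2}, xyxy^{-1} \rangle$. A presentation $\langle x, y \mid x^n y^{-2}, R\rangle$ is regular if $x \mapsto x$, $y \mapsto y$ induces a group isomorphism from the group it presents to $Q_{4n}$. For integers $n_1,m_1$, $\mathcal{P}_n(n_1;m_1) = \langle x, y \mid x^n y^{-2},\ x^{n_1} y x^{m_1} y^{-1} x^{1-n_1} y x^{1-m_1} y^{-1} \rangle$. *)

(* Defs.v *)
From Stdlib Require Import ZArith.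
Open Scope Z_scope.

Record group := Group {
  carrier :> Type;
  gmul : carrier -> carrier -> carrier;
  ginv : carrier -> carrier;
  gone : carrier;
  gmulA : forall a b c, gmul a (gmul b c) = gmul (gmul a b) c;
  gmul1g : forall a, gmul gone a = a;
  gmulVg : forall a, gmul (ginv a) a = gone
}.
Arguments gmul {g}. Arguments ginv {g}. Arguments gone {g}.

Definition gpowp {G : group} (a : G) (p : positive) : G :=
  Pos.iter (gmul a) gone p.
Definition gpow {G : group} (a : G) (z : Z) : G :=
  match z with
  | Z0 => gone
  | Zpos p => gpowp a p
  | Zneg p => ginv (gpowp a p)
  end.

(* Relators of Q_{4n} = < x, y | x^n y^-2, x y x y^-1 >, evaluated at x:=a, y:=b *)
Definition Q_rels (n : Z) {G : group} (a b : G) : Prop :=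
  gmul (gpow a n) (gpow b (-2)) = gone /\
  gmul (gmul (gmul a b) a) (ginv b) = gone.

(* Relators of P_n(n1;m1) = < x, y | x^n y^-2,
      x^n1 y x^m1 y^-1 x^(1-n1) y x^(1-m1) y^-1 >, evaluated at x:=a, y:=b *)
Definition P_rels (n n1 m1 : Z) {G : group} (a b : G) : Prop :=
  gmul (gpow a n) (gpow b (-2)) = gone /\
  gmul (gmul (gmul (gmul (gmul (gmul (gmul
    (gpow a n1) b) (gpow a m1)) (ginv b)) (gpow a (1 - n1))) b)
    (gpow a (1 - m1))) (ginv b) = gone.

(* The presentation P_n(n1;m1) is regular iff x |-> x, y |-> y induces an
   isomorphism onto Q_{4n}, i.e. iff both sets of relators have the same normal
   closure in the free group F(x,y), i.e. (universal property of presented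
   groups) iff in every group a pair (a,b) satisfies the relators of one
   presentation exactly when it satisfies those of the other. *)
Definition regular (n n1 m1 : Z) : Prop :=
  forall (G : group) (a b : G), P_rels n n1 m1 a b <-> Q_rels n a b.

(* Main.v *)
Require Import Defs.
From Stdlib Require Import ZArith Lia List.
Import ListNotations.
Open Scope Z_scope.
Inductive E := e0 | e1 | e2 | e3 | e4 | e5 | e6 | e7 | e8 | e9 | e10 | e11 | e12 | e13 | e14 | e15 | e16 | e17 | e18 | e19 | e20 | e21 | e22 | e23.
Definition emul (x y : E) : E := match x, y with
  | e0, e0 => e0
  | e0, e1 => e1
  | e0, e2 => e2
  | e0, e3 => e3
  | e0, e4 => e4
  | e0, e5 => e5
  | e0, e6 => e6
  | e0, e7 => e7
  | e0, e8 => e8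
  | e0, e9 => e9
  | e0, e10 => e10
  | e0, e11 => e11
  | e0, e12 => e12
  | e0, e13 => e13
  | e0, e14 => e14
  | e0, e15 => e15
  | e0, e16 => e16
  | e0, e17 => e17
  | e0, e18 => e18
  | e0, e19 => e19
  | e0, e20 => e20
  | e0, e21 => e21
  | e0, e22 => e22
  | e0, e23 => e23
  | e1, e0 => e1
  | e1, e1 => e0
  | e1, e2 => e3
  | e1, e3 => e2
  | e1, e4 => e5
  | e1, e5 => e4
  | e1, e6 => e7
  | e1, e7 => e6
  | e1, e8 => e9
  | e1, e9 => e8
  | e1, e10 => e11
  | e1, e11 => e10
  | e1, e12 => e13
  | e1, e13 => e12
  | e1, e14 => e15
  | e1, e15 => e14
  | e1, e16 => e17
  | e1, e17 => e16
  | e1, e18 => e19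
  | e1, e19 => e18
  | e1, e20 => e21
  | e1, e21 => e20
  | e1, e22 => e23
  | e1, e23 => e22
  | e2, e0 => e2
  | e2, e1 => e4
  | e2, e2 => e0
  | e2, e3 => e5
  | e2, e4 => e1
  | e2, e5 => e3
  | e2, e6 => e8
  | e2, e7 => e10
  | e2, e8 => e6
  | e2, e9 => e11
  | e2, e10 => e7
  | e2, e11 => e9
  | e2, e12 => e14
  | e2, e13 => e16
  | e2, e14 => e12
  | e2, e15 => e17
  | e2, e16 => e13
  | e2, e17 => e15
  | e2, e18 => e20
  | e2, e19 => e22
  | e2, e20 => e18
  | e2, e21 => e23
  | e2, e22 => e19
  | e2, e23 => e21
  | e3, e0 => e3
  | e3, e1 => e5
  | e3, e2 => e1
  | e3, e3 => e4
  | e3, e4 => e0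
  | e3, e5 => e2
  | e3, e6 => e9
  | e3, e7 => e11
  | e3, e8 => e7
  | e3, e9 => e10
  | e3, e10 => e6
  | e3, e11 => e8
  | e3, e12 => e15
  | e3, e13 => e17
  | e3, e14 => e13
  | e3, e15 => e16
  | e3, e16 => e12
  | e3, e17 => e14
  | e3, e18 => e21
  | e3, e19 => e23
  | e3, e20 => e19
  | e3, e21 => e22
  | e3, e22 => e18
  | e3, e23 => e20
  | e4, e0 => e4
  | e4, e1 => e2
  | e4, e2 => e5
  | e4, e3 => e0
  | e4, e4 => e3
  | e4, e5 => e1
  | e4, e6 => e10
  | e4, e7 => e8
  | e4, e8 => e11
  | e4, e9 => e6
  | e4, e10 => e9
  | e4, e11 => e7
  | e4, e12 => e16
  | e4, e13 => e14
  | e4, e14 => e17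
  | e4, e15 => e12
  | e4, e16 => e15
  | e4, e17 => e13
  | e4, e18 => e22
  | e4, e19 => e20
  | e4, e20 => e23
  | e4, e21 => e18
  | e4, e22 => e21
  | e4, e23 => e19
  | e5, e0 => e5
  | e5, e1 => e3
  | e5, e2 => e4
  | e5, e3 => e1
  | e5, e4 => e2
  | e5, e5 => e0
  | e5, e6 => e11
  | e5, e7 => e9
  | e5, e8 => e10
  | e5, e9 => e7
  | e5, e10 => e8
  | e5, e11 => e6
  | e5, e12 => e17
  | e5, e13 => e15
  | e5, e14 => e16
  | e5, e15 => e13
  | e5, e16 => e14
  | e5, e17 => e12
  | e5, e18 => e23
  | e5, e19 => e21
  | e5, e20 => e22
  | e5, e21 => e19
  | e5, e22 => e20
  | e5, e23 => e18
  | e6, e0 => e6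
  | e6, e1 => e7
  | e6, e2 => e12
  | e6, e3 => e13
  | e6, e4 => e18
  | e6, e5 => e19
  | e6, e6 => e0
  | e6, e7 => e1
  | e6, e8 => e14
  | e6, e9 => e15
  | e6, e10 => e20
  | e6, e11 => e21
  | e6, e12 => e2
  | e6, e13 => e3
  | e6, e14 => e8
  | e6, e15 => e9
  | e6, e16 => e22
  | e6, e17 => e23
  | e6, e18 => e4
  | e6, e19 => e5
  | e6, e20 => e10
  | e6, e21 => e11
  | e6, e22 => e16
  | e6, e23 => e17
  | e7, e0 => e7
  | e7, e1 => e6
  | e7, e2 => e13
  | e7, e3 => e12
  | e7, e4 => e19
  | e7, e5 => e18
  | e7, e6 => e1
  | e7, e7 => e0
  | e7, e8 => e15
  | e7, e9 => e14
  | e7, e10 => e21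
  | e7, e11 => e20
  | e7, e12 => e3
  | e7, e13 => e2
  | e7, e14 => e9
  | e7, e15 => e8
  | e7, e16 => e23
  | e7, e17 => e22
  | e7, e18 => e5
  | e7, e19 => e4
  | e7, e20 => e11
  | e7, e21 => e10
  | e7, e22 => e17
  | e7, e23 => e16
  | e8, e0 => e8
  | e8, e1 => e10
  | e8, e2 => e14
  | e8, e3 => e16
  | e8, e4 => e20
  | e8, e5 => e22
  | e8, e6 => e2
  | e8, e7 => e4
  | e8, e8 => e12
  | e8, e9 => e17
  | e8, e10 => e18
  | e8, e11 => e23
  | e8, e12 => e0
  | e8, e13 => e5
  | e8, e14 => e6
  | e8, e15 => e11
  | e8, e16 => e19
  | e8, e17 => e21
  | e8, e18 => e1
  | e8, e19 => e3
  | e8, e20 => e7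
  | e8, e21 => e9
  | e8, e22 => e13
  | e8, e23 => e15
  | e9, e0 => e9
  | e9, e1 => e11
  | e9, e2 => e15
  | e9, e3 => e17
  | e9, e4 => e21
  | e9, e5 => e23
  | e9, e6 => e3
  | e9, e7 => e5
  | e9, e8 => e13
  | e9, e9 => e16
  | e9, e10 => e19
  | e9, e11 => e22
  | e9, e12 => e1
  | e9, e13 => e4
  | e9, e14 => e7
  | e9, e15 => e10
  | e9, e16 => e18
  | e9, e17 => e20
  | e9, e18 => e0
  | e9, e19 => e2
  | e9, e20 => e6
  | e9, e21 => e8
  | e9, e22 => e12
  | e9, e23 => e14
  | e10, e0 => e10
  | e10, e1 => e8
  | e10, e2 => e16
  | e10, e3 => e14
  | e10, e4 => e22
  | e10, e5 => e20
  | e10, e6 => e4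
  | e10, e7 => e2
  | e10, e8 => e17
  | e10, e9 => e12
  | e10, e10 => e23
  | e10, e11 => e18
  | e10, e12 => e5
  | e10, e13 => e0
  | e10, e14 => e11
  | e10, e15 => e6
  | e10, e16 => e21
  | e10, e17 => e19
  | e10, e18 => e3
  | e10, e19 => e1
  | e10, e20 => e9
  | e10, e21 => e7
  | e10, e22 => e15
  | e10, e23 => e13
  | e11, e0 => e11
  | e11, e1 => e9
  | e11, e2 => e17
  | e11, e3 => e15
  | e11, e4 => e23
  | e11, e5 => e21
  | e11, e6 => e5
  | e11, e7 => e3
  | e11, e8 => e16
  | e11, e9 => e13
  | e11, e10 => e22
  | e11, e11 => e19
  | e11, e12 => e4
  | e11, e13 => e1
  | e11, e14 => e10
  | e11, e15 => e7
  | e11, e16 => e20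
  | e11, e17 => e18
  | e11, e18 => e2
  | e11, e19 => e0
  | e11, e20 => e8
  | e11, e21 => e6
  | e11, e22 => e14
  | e11, e23 => e12
  | e12, e0 => e12
  | e12, e1 => e18
  | e12, e2 => e6
  | e12, e3 => e19
  | e12, e4 => e7
  | e12, e5 => e13
  | e12, e6 => e14
  | e12, e7 => e20
  | e12, e8 => e0
  | e12, e9 => e21
  | e12, e10 => e1
  | e12, e11 => e15
  | e12, e12 => e8
  | e12, e13 => e22
  | e12, e14 => e2
  | e12, e15 => e23
  | e12, e16 => e3
  | e12, e17 => e9
  | e12, e18 => e10
  | e12, e19 => e16
  | e12, e20 => e4
  | e12, e21 => e17
  | e12, e22 => e5
  | e12, e23 => e11
  | e13, e0 => e13
  | e13, e1 => e19
  | e13, e2 => e7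
  | e13, e3 => e18
  | e13, e4 => e6
  | e13, e5 => e12
  | e13, e6 => e15
  | e13, e7 => e21
  | e13, e8 => e1
  | e13, e9 => e20
  | e13, e10 => e0
  | e13, e11 => e14
  | e13, e12 => e9
  | e13, e13 => e23
  | e13, e14 => e3
  | e13, e15 => e22
  | e13, e16 => e2
  | e13, e17 => e8
  | e13, e18 => e11
  | e13, e19 => e17
  | e13, e20 => e5
  | e13, e21 => e16
  | e13, e22 => e4
  | e13, e23 => e10
  | e14, e0 => e14
  | e14, e1 => e20
  | e14, e2 => e8
  | e14, e3 => e22
  | e14, e4 => e10
  | e14, e5 => e16
  | e14, e6 => e12
  | e14, e7 => e18
  | e14, e8 => e2
  | e14, e9 => e23
  | e14, e10 => e4
  | e14, e11 => e17
  | e14, e12 => e6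
  | e14, e13 => e19
  | e14, e14 => e0
  | e14, e15 => e21
  | e14, e16 => e5
  | e14, e17 => e11
  | e14, e18 => e7
  | e14, e19 => e13
  | e14, e20 => e1
  | e14, e21 => e15
  | e14, e22 => e3
  | e14, e23 => e9
  | e15, e0 => e15
  | e15, e1 => e21
  | e15, e2 => e9
  | e15, e3 => e23
  | e15, e4 => e11
  | e15, e5 => e17
  | e15, e6 => e13
  | e15, e7 => e19
  | e15, e8 => e3
  | e15, e9 => e22
  | e15, e10 => e5
  | e15, e11 => e16
  | e15, e12 => e7
  | e15, e13 => e18
  | e15, e14 => e1
  | e15, e15 => e20
  | e15, e16 => e4
  | e15, e17 => e10
  | e15, e18 => e6
  | e15, e19 => e12
  | e15, e20 => e0
  | e15, e21 => e14
  | e15, e22 => e2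
  | e15, e23 => e8
  | e16, e0 => e16
  | e16, e1 => e22
  | e16, e2 => e10
  | e16, e3 => e20
  | e16, e4 => e8
  | e16, e5 => e14
  | e16, e6 => e17
  | e16, e7 => e23
  | e16, e8 => e4
  | e16, e9 => e18
  | e16, e10 => e2
  | e16, e11 => e12
  | e16, e12 => e11
  | e16, e13 => e21
  | e16, e14 => e5
  | e16, e15 => e19
  | e16, e16 => e0
  | e16, e17 => e6
  | e16, e18 => e9
  | e16, e19 => e15
  | e16, e20 => e3
  | e16, e21 => e13
  | e16, e22 => e1
  | e16, e23 => e7
  | e17, e0 => e17
  | e17, e1 => e23
  | e17, e2 => e11
  | e17, e3 => e21
  | e17, e4 => e9
  | e17, e5 => e15
  | e17, e6 => e16
  | e17, e7 => e22
  | e17, e8 => e5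
  | e17, e9 => e19
  | e17, e10 => e3
  | e17, e11 => e13
  | e17, e12 => e10
  | e17, e13 => e20
  | e17, e14 => e4
  | e17, e15 => e18
  | e17, e16 => e1
  | e17, e17 => e7
  | e17, e18 => e8
  | e17, e19 => e14
  | e17, e20 => e2
  | e17, e21 => e12
  | e17, e22 => e0
  | e17, e23 => e6
  | e18, e0 => e18
  | e18, e1 => e12
  | e18, e2 => e19
  | e18, e3 => e6
  | e18, e4 => e13
  | e18, e5 => e7
  | e18, e6 => e20
  | e18, e7 => e14
  | e18, e8 => e21
  | e18, e9 => e0
  | e18, e10 => e15
  | e18, e11 => e1
  | e18, e12 => e22
  | e18, e13 => e8
  | e18, e14 => e23
  | e18, e15 => e2
  | e18, e16 => e9
  | e18, e17 => e3
  | e18, e18 => e16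
  | e18, e19 => e10
  | e18, e20 => e17
  | e18, e21 => e4
  | e18, e22 => e11
  | e18, e23 => e5
  | e19, e0 => e19
  | e19, e1 => e13
  | e19, e2 => e18
  | e19, e3 => e7
  | e19, e4 => e12
  | e19, e5 => e6
  | e19, e6 => e21
  | e19, e7 => e15
  | e19, e8 => e20
  | e19, e9 => e1
  | e19, e10 => e14
  | e19, e11 => e0
  | e19, e12 => e23
  | e19, e13 => e9
  | e19, e14 => e22
  | e19, e15 => e3
  | e19, e16 => e8
  | e19, e17 => e2
  | e19, e18 => e17
  | e19, e19 => e11
  | e19, e20 => e16
  | e19, e21 => e5
  | e19, e22 => e10
  | e19, e23 => e4
  | e20, e0 => e20
  | e20, e1 => e14
  | e20, e2 => e22
  | e20, e3 => e8
  | e20, e4 => e16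
  | e20, e5 => e10
  | e20, e6 => e18
  | e20, e7 => e12
  | e20, e8 => e23
  | e20, e9 => e2
  | e20, e10 => e17
  | e20, e11 => e4
  | e20, e12 => e19
  | e20, e13 => e6
  | e20, e14 => e21
  | e20, e15 => e0
  | e20, e16 => e11
  | e20, e17 => e5
  | e20, e18 => e13
  | e20, e19 => e7
  | e20, e20 => e15
  | e20, e21 => e1
  | e20, e22 => e9
  | e20, e23 => e3
  | e21, e0 => e21
  | e21, e1 => e15
  | e21, e2 => e23
  | e21, e3 => e9
  | e21, e4 => e17
  | e21, e5 => e11
  | e21, e6 => e19
  | e21, e7 => e13
  | e21, e8 => e22
  | e21, e9 => e3
  | e21, e10 => e16
  | e21, e11 => e5
  | e21, e12 => e18
  | e21, e13 => e7
  | e21, e14 => e20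
  | e21, e15 => e1
  | e21, e16 => e10
  | e21, e17 => e4
  | e21, e18 => e12
  | e21, e19 => e6
  | e21, e20 => e14
  | e21, e21 => e0
  | e21, e22 => e8
  | e21, e23 => e2
  | e22, e0 => e22
  | e22, e1 => e16
  | e22, e2 => e20
  | e22, e3 => e10
  | e22, e4 => e14
  | e22, e5 => e8
  | e22, e6 => e23
  | e22, e7 => e17
  | e22, e8 => e18
  | e22, e9 => e4
  | e22, e10 => e12
  | e22, e11 => e2
  | e22, e12 => e21
  | e22, e13 => e11
  | e22, e14 => e19
  | e22, e15 => e5
  | e22, e16 => e6
  | e22, e17 => e0
  | e22, e18 => e15
  | e22, e19 => e9
  | e22, e20 => e13
  | e22, e21 => e3
  | e22, e22 => e7
  | e22, e23 => e1
  | e23, e0 => e23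
  | e23, e1 => e17
  | e23, e2 => e21
  | e23, e3 => e11
  | e23, e4 => e15
  | e23, e5 => e9
  | e23, e6 => e22
  | e23, e7 => e16
  | e23, e8 => e19
  | e23, e9 => e5
  | e23, e10 => e13
  | e23, e11 => e3
  | e23, e12 => e20
  | e23, e13 => e10
  | e23, e14 => e18
  | e23, e15 => e4
  | e23, e16 => e7
  | e23, e17 => e1
  | e23, e18 => e14
  | e23, e19 => e8
  | e23, e20 => e12
  | e23, e21 => e2
  | e23, e22 => e6
  | e23, e23 => e0
  end.
Definition einv (x : E) : E := match x with
  | e0 => e0
  | e1 => e1
  | e2 => e2
  | e3 => e4
  | e4 => e3
  | e5 => e5
  | e6 => e6
  | e7 => e7
  | e8 => e12
  | e9 => e18
  | e10 => e13
  | e11 => e19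
  | e12 => e8
  | e13 => e10
  | e14 => e14
  | e15 => e20
  | e16 => e16
  | e17 => e22
  | e18 => e9
  | e19 => e11
  | e20 => e15
  | e21 => e21
  | e22 => e17
  | e23 => e23
  end.
Definition eone := e0.
Definition ea := e3.
Definition eb := e6.
Definition eall := [e0; e1; e2; e3; e4; e5; e6; e7; e8; e9; e10; e11; e12; e13; e14; e15; e16; e17; e18; e19; e20; e21; e22; e23].
Definition eeqb (x y : E) : bool := match x, y with
  | e0, e0 => true
  | e1, e1 => true
  | e2, e2 => true
  | e3, e3 => true
  | e4, e4 => true
  | e5, e5 => true
  | e6, e6 => true
  | e7, e7 => true
  | e8, e8 => true
  | e9, e9 => true
  | e10, e10 => true
  | e11, e11 => true
  | e12, e12 => true
  | e13, e13 => true
  | e14, e14 => true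
  | e15, e15 => true
  | e16, e16 => true
  | e17, e17 => true
  | e18, e18 => true
  | e19, e19 => true
  | e20, e20 => true
  | e21, e21 => true
  | e22, e22 => true
  | e23, e23 => true
  | _, _ => false end.

Lemma eeqb_eq x y : eeqb x y = true -> x = y.
Proof. destruct x, y; simpl; congruence. Qed.
Lemma in_all x : In x eall.
Proof. destruct x; simpl; tauto. Qed.
Lemma check_assoc : forallb (fun a => forallb (fun b => forallb (fun c =>
  eeqb (emul a (emul b c)) (emul (emul a b) c)) eall) eall) eall = true.
Proof. vm_compute. reflexivity. Qed.
Lemma emulA a b c : emul a (emul b c) = emul (emul a b) c.
Proof.
  apply eeqb_eq.
  pose proof check_assoc as H.
  rewrite forallb_forall in H. specialize (H a (in_all a)).
  rewrite forallb_forall in H. specialize (H b (in_all b)).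
  rewrite forallb_forall in H. exact (H c (in_all c)).
Qed.
Lemma emul1 a : emul eone a = a. Proof. destruct a; reflexivity. Qed.
Lemma emulV a : emul (einv a) a = eone. Proof. destruct a; reflexivity. Qed.

Definition GS4 : group := Group E emul einv eone emulA emul1 emulV.

Definition pw (k : Z) : GS4 :=
  match k with 0 => eone | 1 => ea | _ => emul ea ea end.

Lemma gpowp_a p : @gpowp GS4 ea p = pw (Zpos p mod 3).
Proof.
  induction p using Pos.peano_ind.
  - reflexivity.
  - unfold gpowp in *. rewrite Pos.iter_succ. rewrite IHp.
    rewrite Pos2Z.inj_succ.
    assert (Hk: 0 <= Zpos p mod 3 < 3) by (apply Z.mod_pos_bound; lia).
    destruct (Z.eq_dec (Zpos p mod 3) 0) as [E0|N0];
    [|destruct (Z.eq_dec (Zpos p mod 3) 1) as [E1|N1]].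
    + rewrite E0. replace (Z.succ (Zpos p) mod 3) with 1 by (Z.div_mod_to_equations; lia). reflexivity.
    + rewrite E1. replace (Z.succ (Zpos p) mod 3) with 2 by (Z.div_mod_to_equations; lia). reflexivity.
    + replace (Zpos p mod 3) with 2 by (Z.div_mod_to_equations; lia).
      replace (Z.succ (Zpos p) mod 3) with 0 by (Z.div_mod_to_equations; lia). reflexivity.
Qed.

Lemma gpow_a z : @gpow GS4 ea z = pw (z mod 3).
Proof.
  destruct z as [|p|p].
  - reflexivity.
  - apply gpowp_a.
  - simpl gpow. rewrite gpowp_a.
    assert (Hk: 0 <= Zpos p mod 3 < 3) by (apply Z.mod_pos_bound; lia).
    destruct (Z.eq_dec (Zpos p mod 3) 0) as [E0|N0];
    [|destruct (Z.eq_dec (Zpos p mod 3) 1) as [E1|N1]].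
    + rewrite E0. replace (Zneg p mod 3) with 0 by (Z.div_mod_to_equations; lia). reflexivity.
    + rewrite E1. replace (Zneg p mod 3) with 2 by (Z.div_mod_to_equations; lia). reflexivity.
    + replace (Zpos p mod 3) with 2 by (Z.div_mod_to_equations; lia).
      replace (Zneg p mod 3) with 1 by (Z.div_mod_to_equations; lia). reflexivity.
Qed.

Lemma P_holds n n1 m1 : (3 | n) -> n1 mod 3 = 2 -> m1 mod 3 = 2 ->
  @P_rels n n1 m1 GS4 ea eb.
Proof.
  intros Hn H1 H2. unfold P_rels. rewrite !gpow_a.
  replace (n mod 3) with 0 by (symmetry; apply Z.mod_divide; [lia|exact Hn]).
  rewrite H1, H2.
  replace ((1 - n1) mod 3) with 2 by (Z.div_mod_to_equations; lia).
  replace ((1 - m1) mod 3) with 2 by (Z.div_mod_to_equations; lia).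
  split; vm_compute; reflexivity.
Qed.

Lemma Q_fails n : ~ @Q_rels n GS4 ea eb.
Proof. intros [_ H]. vm_compute in H. discriminate. Qed.

Theorem proposition3p12 (n r : Z) :
  2 <= n -> r mod 3 = 2 -> (3 | n) ->
  ~ regular n 2 (1 - r) /\ ~ regular n r r.
Proof.
  intros _ Hr Hn. split; intro H; apply (Q_fails n); apply (H GS4 ea eb);
  apply P_holds; auto; Z.div_mod_to_equations; lia.
Qed.
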